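(* Let $\Gamma\le\mathrm{Iso}(\mathbb{R}^{r,s})$ be a subgroup whose centralizer in $\mathrm{Iso}(\mathbb{R}^{r,s})$ has an open orbit in $\mathbb{R}^{r,s}$, let $\Delta$ be the center of $\Gamma$ and $U_0=U_\Gamma\cap U_\Gamma^\perp$. Then $\mathbb{R}^{r,s}\supseteq U_\Delta^\perp\supseteq U_0\supseteq\{0\}$, and for every $(I+A,v)\in\Gamma$: $A(\mathbb{R}^{r,s})\subseteq U_\Delta^\perp$, $A(U_\Delta^\perp)\subseteq U_0$, and $A(U_0)=\{0\}$.
   Context: $\mathbb{R}^{r,s}$ denotes $\mathbb{R}^{n}$, $n=r+s$, with a nondegenerate symmetric bilinear form $\langle\cdot,\cdot\rangle$ of signature $(r,s)$; $\mathrm{Iso}(\mathbb{R}^{r,s})$ is its group of affine isometries, whose elements are written $\gamma=(I+A,v)\colon x\mapsto(I+A)x+v$. For a subset $\Lambda$ of $\Gamma$, $U_\Lambda=\sum_{(I+A,v)\in\Lambda}\operatorname{im}A$; $\perp$ denotes orthogonal complement with respect to $\langle\cdot,\cdot\rangle$. Known facts (Wolf) for such $\Gamma$: every $(I+A,v)\in\Gamma$ satisfies $A^2=0$, $Av=0$, $\langle Ax,y\rangle=-\langle x,Ay\rangle$, $\ker A=(\operatorname{im}A)^\perp$, $\operatorname{im}A$ totally isotropic; for $\gamma_i=(I+A_i,v_i)\in\Gamma$ one has $A_1A_2A_3=0$ and $[\gamma_1,\gamma_2]=(I+2A_1A_2,2A_1v_2)$. *)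

(* Defs.v *)
From HB Require Import structures.
From mathcomp Require Import all_boot all_order all_algebra.
Set Implicit Arguments. Unset Strict Implicit. Unset Printing Implicit Defensive.
Import Order.TTheory GRing.Theory Num.Theory.
Local Open Scope ring_scope.

Section RrsDefs.
Variables (R : rcfType) (r s : nat).
Local Notation n := (r + s)%N.

Definition gramJ : 'M[R]_n :=
  \matrix_(i, j) (if i == j then (if (i < r)%N then 1 else -1) else 0).

Definition form (x y : 'cV[R]_n) : R := (x^T *m gramJ *m y) 0 0.

(* Affine maps x |-> M x + v, written as pairs (M, v) with M = I + A. *)
Definition aff := ('M[R]_n * 'cV[R]_n)%type.

Definition act (g : aff) (x : 'cV[R]_n) : 'cV[R]_n := g.1 *m x + g.2.

Definition aff_id : aff := (1%:M, 0).
Definition aff_mul (g h : aff) : aff := (g.1 *m h.1, g.1 *m h.2 + g.2).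
Definition aff_inv (g : aff) : aff := (invmx g.1, - (invmx g.1 *m g.2)).

Definition isIso (g : aff) : Prop := g.1^T *m gramJ *m g.1 = gramJ.

Definition is_iso_subgroup (G : aff -> Prop) : Prop :=
  [/\ forall g, G g -> isIso g,
      G aff_id,
      forall g h, G g -> G h -> G (aff_mul g h)
    & forall g, G g -> G (aff_inv g)].

Definition centralizer (G : aff -> Prop) : aff -> Prop :=
  fun c => isIso c /\ forall g, G g -> aff_mul c g = aff_mul g c.

Definition center (G : aff -> Prop) : aff -> Prop :=
  fun c => G c /\ forall g, G g -> aff_mul c g = aff_mul g c.

Definition orbit (C : aff -> Prop) (x0 : 'cV[R]_n) : 'cV[R]_n -> Prop :=
  fun y => exists2 c, C c & y = act c x0.

Definition is_open (S : 'cV[R]_n -> Prop) : Prop :=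
  forall y, S y -> exists2 e : R, 0 < e &
    forall z : 'cV[R]_n, (forall i, `|z i 0 - y i 0| < e) -> S z.

Definition has_open_orbit (C : aff -> Prop) : Prop :=
  exists x0, is_open (orbit C x0).

(* U_L = sum over (I+A, v) in L of im A : the set of finite sums of
   vectors A x with (I + A, v) in L. *)
Definition U_of (L : aff -> Prop) : 'cV[R]_n -> Prop :=
  fun u => exists2 l : seq (aff * 'cV[R]_n),
    (forall p, p \in l -> L p.1) &
    u = \sum_(p <- l) ((p.1.1 - 1%:M) *m p.2).

Definition orth (W : 'cV[R]_n -> Prop) : 'cV[R]_n -> Prop :=
  fun x => forall w, W w -> form x w = 0.

End RrsDefs.

(* Main.v *)
Require Import Defs.
From HB Require Import structures.
From mathcomp Require Import all_boot all_order all_algebra.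
Import Order.TTheory GRing.Theory Num.Theory.
Local Open Scope ring_scope.

Lemma lin2z (V : zmodType) (h2 : forall x : V, x + x = 0 -> x = 0) (x y : V) :
  x + y = 0 -> - x + y = 0 -> x = 0.
Proof.
move/eqP; rewrite addr_eq0 => /eqP ->; rewrite opprK => /h2 ->.
by rewrite oppr0.
Qed.

Section Alg.
Variable T : pzRingType.
Hypothesis h2 : forall x : T, x + x = 0 -> x = 0.

Lemma lin2 (x y : T) : x + y = 0 -> - x + y = 0 -> x = 0.
Proof.
move/eqP; rewrite addr_eq0 => /eqP ->; rewrite opprK => /h2 ->.
by rewrite oppr0.
Qed.

Lemma anti (a b : T) : a * a = 0 -> b * b = 0 ->
  (a + b + a * b) * (a + b + a * b) = 0 ->
  (a - b - a * b) * (a - b - a * b) = 0 -> a * (b * a) = 0 /\ a * b = - (b * a).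
Proof.
move=> haa hbb hP hQ.
have haa' x : a * (a * x) = 0 by rewrite mulrA haa mul0r.
have hbb' x : b * (b * x) = 0 by rewrite mulrA hbb mul0r.
have E1 := congr1 (fun x => a * x) hP.
have E2 := congr1 (fun x => a * x) hQ.
move: E1 E2 => /=.
rewrite ?mulrDl ?mulrDr ?mulrN ?mulNr -?mulrA ?mulrDr ?mulrN ?mulNr ?opprK.
rewrite ?haa ?hbb ?haa' ?hbb' ?mulr0 ?oppr0 ?addr0 ?add0r => E1 E2.
have haba := lin2 _ _ E1 E2.
have habab : a * (b * (a * b)) = 0.
  by rewrite (_ : a * (b * (a * b)) = (a * (b * a)) * b); [rewrite haba mul0r | rewrite !mulrA].
have E3 := congr1 (fun x => x * b) hP.
move: E3 => /=.
do 3 rewrite ?mulrDl ?mulrDr ?mulrN ?mulNr -?mulrA ?opprK.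
rewrite ?haa ?hbb ?haa' ?hbb' ?haba ?habab ?mulr0 ?mul0r ?oppr0 ?addr0 ?add0r => E3.
split=> //.
move: hP.
do 3 rewrite ?mulrDl ?mulrDr ?mulrN ?mulNr -?mulrA ?opprK.
rewrite ?haa ?hbb ?haa' ?hbb' ?haba ?habab ?E3 ?mulr0 ?mul0r ?oppr0 ?addr0 ?add0r.
by move/eqP; rewrite addr_eq0 => /eqP.
Qed.

Lemma triple (a b c : T) : a * b = - (b * a) -> a * c = - (c * a) ->
  a * (b + c + b * c) = - ((b + c + b * c) * a) -> a * (b * c) = 0.
Proof.
move=> hab hac.
rewrite !mulrDr !mulrDl !opprD hab hac => /addrI h.
apply: h2.
have hca : c * a = - (a * c) by rewrite hac opprK.
have hba : b * a = - (a * b) by rewrite hab opprK.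
rewrite {1}h -mulrA hca mulrN mulrA hba mulNr opprK.
by rewrite -mulrA addNr.
Qed.

End Alg.

Lemma comm_anti (T : pzRingType) (h2 : forall x : T, x + x = 0 -> x = 0) (a c : T) :
  a * c = c * a -> a * c = - (c * a) -> a * c = 0.
Proof. by move=> e1 e2; apply: h2; rewrite {1}e1 e2 addrN. Qed.

Lemma small_k (R : rcfType) n (e : R) (u : 'cV[R]_n) : 0 < e ->
  exists2 h : R, 0 < h & forall i, `|h * u i 0| < e.
Proof.
move=> e0.
set S := \sum_(i < n) `|u i 0|.
have S0 : 0 <= S by apply: sumr_ge0 => i _.
have S1 : 0 < 1 + S by apply: ltr_wpDr.
exists (e / (1 + S)); first by rewrite divr_gt0.
move=> i; rewrite normrM gtr0_norm ?divr_gt0 //.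
have hS : `|u i 0| <= S by rewrite /S (bigD1 i) //= ler_wpDr // sumr_ge0.
apply: (le_lt_trans (y := e / (1 + S) * S)).
  by rewrite ler_pM2l ?divr_gt0.
rewrite [X in _ < X](_ : e = e / (1 + S) * (1 + S)); last by rewrite divfK ?gt_eqF.
by rewrite ltr_pM2l ?divr_gt0 // ltrDr ltr01.
Qed.

Section Mx.
Variables (R : rcfType) (r s : nat).
Local Notation n := (r + s)%N.
Local Notation J := (gramJ R r s).
Local Notation fm := (@Defs.form R r s).

Lemma h2R (x : R) : x + x = 0 -> x = 0.
Proof. by move=> h; apply/eqP; have := mulrn_eq0 x 2; rewrite mulr2n h eqxx /= => <-. Qed.

Lemma h2M m p (x : 'M[R]_(m, p)) : x + x = 0 -> x = 0.
Proof.
move=> h; apply/matrixP => i j; rewrite mxE; apply: h2R.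
by have := congr1 (fun M : 'M_(m,p) => M i j) h; rewrite !mxE.
Qed.

Definition dJ : 'rV[R]_n := \row_(i < n) (if (i < r)%N then 1 else -1).

Lemma JdE : J = diag_mx dJ.
Proof.
apply/matrixP => i j; rewrite !mxE.
by case: (i == j); rewrite ?mulr1n ?mulr0n.
Qed.

Lemma trJ : J^T = J.
Proof. by rewrite JdE tr_diag_mx. Qed.

Lemma JJ : J *m J = 1%:M.
Proof.
rewrite JdE mulmx_diag; apply/matrixP => i j; rewrite !mxE.
by case: (i < r)%N; rewrite ?mulr1 ?mulrNN ?mulr1.
Qed.

Lemma fmE x y : fm x y = (x^T *m J *m y) 0 0.
Proof. by []. Qed.

Lemma entry_tr m p (M : 'M[R]_(m, p)) i j : M^T j i = M i j.
Proof. by rewrite mxE. Qed.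

Lemma fm_sym x y : fm x y = fm y x.
Proof.
by rewrite !fmE -entry_tr !trmx_mul trmxK trJ mulmxA.
Qed.

Lemma fmDl x y z : fm (x + y) z = fm x z + fm y z.
Proof. by rewrite !fmE linearD /= !mulmxDl mxE. Qed.

Lemma fmDr x y z : fm x (y + z) = fm x y + fm x z.
Proof. by rewrite !fmE !mulmxDr mxE. Qed.

Lemma fmZl k x z : fm (k *: x) z = k * fm x z.
Proof. by rewrite !fmE linearZ /= -!scalemxAl mxE. Qed.

Lemma fmZr k x z : fm x (k *: z) = k * fm x z.
Proof. by rewrite !fmE -scalemxAr mxE. Qed.

Lemma fm0r x : fm x 0 = 0.
Proof. by rewrite fmE mulmx0 mxE. Qed.

Lemma fmNr x y : fm x (- y) = - fm x y.
Proof. by rewrite !fmE mulmxN mxE. Qed.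

Lemma fm_sumr x I (l : seq I) (F : I -> 'cV[R]_n) :
  fm x (\sum_(i <- l) F i) = \sum_(i <- l) fm x (F i).
Proof.
elim: l => [|a l IH]; first by rewrite !big_nil fm0r.
by rewrite !big_cons fmDr IH.
Qed.

Lemma vec0 m (w : 'cV[R]_m) : (forall z : 'cV[R]_m, (z^T *m w) 0 0 = 0) -> w = 0.
Proof.
move=> h; apply/matrixP => i j; rewrite (ord1 j) mxE.
have := h (delta_mx i 0); rewrite trmx_delta -rowE mxE => <-.
by [].
Qed.

Lemma nondeg y : (forall z, fm z y = 0) -> y = 0.
Proof.
move=> h; have: J *m y = 0.
  by apply: vec0 => z; rewrite mulmxA; exact: h z.
by move=> e; rewrite -[y]mul1mx -JJ -mulmxA e mulmx0.
Qed.

Lemma bilin0 (N : 'M[R]_n) : (forall x y : 'cV[R]_n, (x^T *m N *m y) 0 0 = 0) -> N = 0.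
Proof.
move=> h; have hy (y : 'cV[R]_n) : N *m y = 0 by apply: vec0 => z; rewrite mulmxA h.
apply/matrixP => i j; rewrite mxE.
by have := hy (delta_mx j 0); rewrite -colE => /matrixP /(_ i 0); rewrite !mxE.
Qed.

Lemma fm_quad d a t : fm (d + t *: a) (d + t *: a) =
  fm d d + (t * (fm d a + fm a d) + t * (t * fm a a)).
Proof.
rewrite !fmDl !fmDr !fmZl !fmZr !mulrDr -!addrA; congr (_ + _).
Qed.

Lemma orbit_disp (Gamma : aff R r s -> Prop) x0 z g : Gamma g ->
  Defs.orbit (centralizer Gamma) x0 z ->
  fm ((g.1 - 1%:M) *m z + g.2) ((g.1 - 1%:M) *m z + g.2) =
  fm ((g.1 - 1%:M) *m x0 + g.2) ((g.1 - 1%:M) *m x0 + g.2).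
Proof.
move=> Gg [c [isoc hc] ->].
move: (hc g Gg); clear hc.
case: c isoc => C w; case: g Gg => M v Gg /= isoc.
rewrite /aff_mul /= => -[e1 e2].
rewrite /act /=; rewrite /isIso /= in isoc.
have ev : C *m v = M *m w + v - w by rewrite -e2 addrK.
have -> : (M - 1%:M) *m (C *m x0 + w) + v = C *m ((M - 1%:M) *m x0 + v).
  rewrite !mulmxDr !mulmxBl !mul1mx ?mulmxBr ?mulmx1 !mulmxA e1 ev.
  by rewrite -!addrA (addrC (-w) v).
rewrite /Defs.form trmx_mul.
set d := (M - 1%:M) *m x0 + v.
by rewrite mulmxA -2!(mulmxA d^T) isoc.
Qed.

Lemma elem (Gamma : aff R r s -> Prop) (hopen : has_open_orbit (centralizer Gamma)) g :
  Gamma g -> isIso g -> [/\ (g.1 - 1%:M) *m (g.1 - 1%:M) = 0,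
    (g.1 - 1%:M)^T *m J = - (J *m (g.1 - 1%:M)) & (g.1 - 1%:M) *m g.2 = 0].
Proof.
move=> Gg hiso.
case: hopen => x0 hop.
have x0o : Defs.orbit (centralizer Gamma) x0 x0.
  exists (aff_id R r s); last by rewrite /act /= mul1mx addr0.
  split; first by rewrite /isIso /= trmx1 mul1mx mulmx1.
  by move=> h _; rewrite /aff_mul /= mul1mx mulmx1 mulmx0 addr0 add0r mul1mx.
case: (hop x0 x0o) => e e0 hball.
set A := g.1 - 1%:M; set v := g.2; set D0 := A *m x0 + v.
have key u : fm (A *m u) (A *m u) = 0 /\ fm D0 (A *m u) + fm (A *m u) D0 = 0.
  case: (@small_k R n e u e0) => h h0 hu.
  have ht t : `|t| = h ->
      t * (fm D0 (A *m u) + fm (A *m u) D0) + t * (t * fm (A *m u) (A *m u)) = 0.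
    move=> th.
    have hz : Defs.orbit (centralizer Gamma) x0 (x0 + t *: u).
      apply: hball => i; rewrite !mxE addrAC subrr add0r normrM th.
      by have := hu i; rewrite normrM gtr0_norm.
    have := @orbit_disp Gamma x0 _ g Gg hz; rewrite -/A -/v -/D0.
    rewrite mulmxDr -scalemxAr addrAC -/D0.
    rewrite fm_quad -[RHS]addr0 => /addrI.
    done.
  have e1 := ht h (gtr0_norm h0).
  have e2 := ht (- h); rewrite normrN gtr0_norm // !mulNr !mulrN opprK in e2.
  have hx := @lin2 _ h2R _ _ e1 (e2 erefl).
  move: e1; rewrite hx add0r => /eqP; rewrite !mulf_eq0 (gt_eqF h0) /= => /eqP hb.
  move/eqP: hx; rewrite mulf_eq0 (gt_eqF h0) /= => /eqP ha.
  by [].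
have hAA x y : fm (A *m x) (A *m y) = 0.
  have [k1 _] := key (x + y).
  have [k2 _] := key x; have [k3 _] := key y.
  move: k1; rewrite mulmxDr !fmDl !fmDr k2 k3 add0r addr0 (fm_sym (A *m y)).
  exact: h2R.
have hN : A^T *m J *m A = 0.
  apply: bilin0 => x y; have := hAA x y.
  by rewrite fmE trmx_mul !mulmxA.
have g1 : g.1 = A + 1%:M by rewrite /A subrK.
clearbody A.
have hsk : A^T *m J = - (J *m A).
  move: hiso; rewrite /isIso g1 [(A + _)^T]linearD /= trmx1 mulmxDl !mulmxDr !mulmxDl hN add0r.
  rewrite !mul1mx !mulmx1 addrA -[X in _ = X]add0r => /addIr /eqP.
  by rewrite addrC addr_eq0 => /eqP.
have hJA : J *m (A *m A) = 0.
  by rewrite mulmxA -[J *m A]opprK -hsk mulNmx hN oppr0.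
split => //.
  by rewrite -[A *m A]mul1mx -JJ -mulmxA hJA mulmx0.
have hv u : fm v (A *m u) = 0.
  have [_ k] := key u.
  move: k; rewrite /D0 (fm_sym (A *m u)) !fmDl hAA !add0r.
  exact: h2R.
have : A^T *m J *m v = 0.
  apply: vec0 => u; rewrite !mulmxA -trmx_mul -fmE fm_sym; exact: hv.
rewrite hsk mulNmx => /eqP; rewrite oppr_eq0 => /eqP hJv.
by rewrite -[A *m v]mul1mx -JJ -mulmxA (mulmxA J A v) hJv mulmx0.
Qed.
Local Notation T := ('M[R]_n).
Definition Am (g : aff R r s) : T := g.1 - 1.

Lemma Am_eq g : g.1 = Am g + 1.
Proof. by rewrite /Am subrK. Qed.

Lemma Am_mul g h : Am (aff_mul g h) = Am g + Am h + Am g * Am h.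
Proof.
rewrite [in LHS]/Am /aff_mul /= mulmxE (Am_eq g) (Am_eq h).
by rewrite mulrDl mulrDr mul1r mulr1 addrA addrK -addrA addrC.
Qed.

Lemma inv_eq g : Am g * Am g = 0 -> Am g *m g.2 = 0 ->
  aff_inv g = (1 - Am g, - g.2).
Proof.
move=> haa hav.
have e : g.1 * (1 - Am g) = 1.
  by rewrite Am_eq mulrBr mulr1 mulrDl mul1r haa add0r addrAC subrr add0r.
have [u1 _] := mulmx1_unit e.
have hi : invmx g.1 = 1 - Am g.
  by rewrite -[RHS]mul1mx -(mulVmx u1) -mulmxA mulmxE e mulr1.
rewrite /aff_inv hi mulmxBl mul1mx hav subr0.
done.
Qed.

Set Implicit Arguments.
Variable Gamma : aff R r s -> Prop.
Hypothesis hG : is_iso_subgroup Gamma.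
Hypothesis hopen : has_open_orbit (centralizer Gamma).

Lemma G_mul g h : Gamma g -> Gamma h -> Gamma (aff_mul g h).
Proof. by case: hG => _ _ hm _; apply: hm. Qed.

Lemma efacts g : Gamma g ->
  [/\ Am g * Am g = 0, (Am g)^T *m J = - (J *m Am g) & Am g *m g.2 = 0].
Proof.
move=> Gg; have hi : isIso g by case: hG => hi _ _ _; apply: hi.
by have [] := @elem Gamma hopen g Gg hi; rewrite -mulmxE.
Qed.

Lemma G_inv g : Gamma g -> Gamma (1 - Am g, - g.2).
Proof.
move=> Gg; have [haa _ hav] := efacts Gg.
by rewrite -(@inv_eq g haa hav); case: hG => _ _ _; apply.
Qed.

Lemma Am_inv g : Am (1 - Am g, - g.2) = - Am g.
Proof. by rewrite /Am /= addrAC subrr add0r. Qed.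

Lemma pair_anti g h : Gamma g -> Gamma h ->
  Am g * (Am h * Am g) = 0 /\ Am g * Am h = - (Am h * Am g).
Proof.
move=> Gg Gh.
have [haa _ _] := efacts Gg; have [hbb _ _] := efacts Gh.
have [hP _ _] := efacts (G_mul Gg Gh).
have [hQ _ _] := efacts (G_mul Gg (G_inv Gh)).
rewrite Am_mul in hP; rewrite Am_mul Am_inv mulrN in hQ.
exact: (@anti _ (@h2M n n) _ _ haa hbb hP hQ).
Qed.

Lemma triple3 g h k : Gamma g -> Gamma h -> Gamma k ->
  Am g * (Am h * Am k) = 0.
Proof.
move=> Gg Gh Gk.
have [_ hab] := pair_anti Gg Gh; have [_ hac] := pair_anti Gg Gk.
have [_ e] := pair_anti Gg (G_mul Gh Gk).
rewrite Am_mul in e.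
exact: (@triple _ (@h2M n n) _ _ _ hab hac e).
Qed.

Lemma trans2 g h : Gamma g -> Gamma h ->
  Am g *m h.2 = - (Am h *m g.2) /\ Am h *m (Am g *m h.2) = 0.
Proof.
move=> Gg Gh.
have [haa _ hav] := efacts Gg; have [hbb _ hbw] := efacts Gh.
have [haba hab] := pair_anti Gg Gh.
have [_ _ E1] := efacts (G_mul Gg Gh).
have [_ _ E2] := efacts (G_mul Gg (G_inv Gh)).
rewrite Am_mul in E1; rewrite Am_mul Am_inv mulrN in E2.
move: haa hbb hav hbw haba hab E1 E2; rewrite /aff_mul /= (Am_eq g).
move: (Am g) (Am h) g.2 h.2 => a b v w haa hbb hav hbw haba hab.
have haa' x : a *m (a *m x) = 0 by rewrite mulmxA mulmxE haa mul0mx.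
have haba' x : a *m (b *m (a *m x)) = 0 by rewrite !mulmxA !mulmxE -mulrA haba mul0mx.
have habv : a *m (b *m v) = 0 by rewrite mulmxA mulmxE hab -mulmxE mulNmx -mulmxA hav mulmx0 oppr0.
rewrite -!mulmxE.
rewrite !mulmxDl !mulmxDr.
do 3 rewrite ?mul1mx ?mulmxN ?mulNmx -?mulmxA ?opprK.
rewrite ?haa' ?haba' ?habv ?hav ?hbw ?mulmx0 ?oppr0 ?addr0 ?add0r.
move=> E1 E2.
have e1 : (a *m w + b *m v) + b *m (a *m w) = 0 by rewrite -E1 addrCA addrC.
have e2 : - (a *m w + b *m v) + b *m (a *m w) = 0 by rewrite -E2 opprD addrCA addrC.
have hY := @lin2z _ (@h2M n 1) _ _ e1 e2.
split; first by apply/eqP; rewrite -addr_eq0 hY.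
by move: e1; rewrite hY add0r.
Qed.

Definition commu g h := aff_mul (aff_mul g h) (aff_mul (1 - Am g, - g.2) (1 - Am h, - h.2)).

Lemma commu_eq g h : Gamma g -> Gamma h ->
  commu g h = (1 + (Am g * Am h) *+ 2, (Am g *m h.2) *+ 2).
Proof.
move=> Gg Gh.
have [haa _ hav] := efacts Gg; have [hbb _ hbw] := efacts Gh.
have [haba hab] := pair_anti Gg Gh.
have [hbab _] := pair_anti Gh Gg.
have [t1 t2] := trans2 Gg Gh.
rewrite /commu /aff_mul /= (Am_eq g) (Am_eq h).
move: haa hbb hav hbw haba hab hbab t1 t2.
move: (Am g) (Am h) g.2 h.2 => a b v w haa hbb hav hbw haba hab hbab t1 t2.
have haa' x : a * (a * x) = 0 by rewrite mulrA haa mul0r.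
have hbb' x : b * (b * x) = 0 by rewrite mulrA hbb mul0r.
have haba' x : a * (b * (a * x)) = 0 by rewrite !mulrA -(mulrA a) haba mul0r.
have hbab' x : b * (a * (b * x)) = 0 by rewrite !mulrA -(mulrA b) hbab mul0r.
congr (_, _).
  rewrite !mulmxE.
  do 4 rewrite ?mulrDl ?mulrDr ?mulrBl ?mulrBr ?mulrN ?mulNr ?mul1r ?mulr1 -?mulrA ?opprK.
  have hba : b * a = - (a * b) by rewrite hab opprK.
  rewrite ?haa' ?hbb' ?haba' ?hbab' ?haa ?hbb ?haba ?hbab ?mulr0 ?oppr0 ?addr0 ?add0r ?subr0 hba !opprK.
  rewrite (addrAC (a * b)) subrr add0r (addrAC b) subrr add0r addrCA; congr (1 + _).
  by rewrite (addrAC (a * b) (- a)) addrC subrK mulr2n.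
have maa x : a *m (a *m x) = 0 by rewrite mulmxA mulmxE haa mul0mx.
have mbb x : b *m (b *m x) = 0 by rewrite mulmxA mulmxE hbb mul0mx.
have mabv : a *m (b *m v) = 0.
  by rewrite mulmxA mulmxE hab -mulmxE mulNmx -mulmxA hav mulmx0 oppr0.
have mbaw : b *m (a *m w) = 0 by [].
have mbv : b *m v = - (a *m w) by rewrite t1 opprK.
rewrite !mulmxDl !mulmxDr.
do 3 rewrite ?mul1mx ?mulmxN ?mulNmx ?mulmxBl ?mulmxBr ?mulmxDl ?mulmxDr -?mulmxA ?opprK.
rewrite ?maa ?mbb ?mabv ?mbaw ?hav ?hbw ?mulmx0 ?oppr0 ?addr0 ?add0r ?subr0 ?mbv ?opprK.
rewrite opprD opprK (addrC (- (a *m w))) -addrA -(addrA (a *m w) w v) addKr.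
by rewrite addrACA subrK (addrAC (- w)) addNr add0r mulr2n.
Qed.

Lemma commu_center g h : Gamma g -> Gamma h -> center Gamma (commu g h).
Proof.
move=> Gg Gh; split.
  exact: G_mul (G_mul Gg Gh) (G_mul (G_inv Gg) (G_inv Gh)).
move=> k Gk.
have t3 := triple3 Gg Gh Gk; have t3' := triple3 Gk Gg Gh.
have [tb _] := trans2 Gh Gk.
have [_ hac] := pair_anti Gg Gk.
rewrite commu_eq // /aff_mul /= (Am_eq k).
move: t3 t3' tb hac; move: (Am g) (Am h) (Am k) h.2 k.2 => a b c w u t3 t3' tb hac.
congr (_, _).
  rewrite !mulmxE !mulr2n !mulrDl !mulrDr !mul1r !mulr1 -!mulrA.
  by rewrite t3 t3' !add0r addr0 [RHS]addrA.
have key : (a * b) *m u = c *m (a *m w).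
  rewrite -mulmxA tb mulmxN mulmxA (mulmxA a) -[a *m c]/(a * c) hac mulNmx opprK.
  by [].
rewrite !mulr2n !mulmxDl !mulmxDr !mul1mx key.
by rewrite -addrA addrC.
Qed.

Lemma fm0l x : fm 0 x = 0.
Proof. by rewrite fmE trmx0 !mul0mx mxE. Qed.

Lemma orth_U (L : aff R r s -> Prop) y :
  (forall p : aff R r s * 'cV[R]_n, L p.1 -> fm y ((p.1.1 - 1%:M) *m p.2) = 0) ->
  orth (U_of L) y.
Proof.
move=> h w [l hl ->]; rewrite fm_sumr big_seq big1 // => p pl.
by apply: h; apply: hl.
Qed.

Lemma U_single (L : aff R r s -> Prop) g x : L g -> U_of L ((g.1 - 1%:M) *m x).
Proof.
move=> Lg; exists [:: (g, x)]; first by move=> p; rewrite inE => /eqP ->.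
by rewrite big_cons big_nil addr0.
Qed.

Lemma fm_A g x z : Gamma g -> fm (Am g *m x) z = - fm x (Am g *m z).
Proof.
move=> Gg; have [_ hsk _] := efacts Gg.
by rewrite !fmE trmx_mul -(mulmxA x^T) hsk mulmxN mulNmx mxE !mulmxA.
Qed.

Lemma main_sec :
  let UDp := orth (U_of (center Gamma)) in
  let U0 := fun x => U_of Gamma x /\ orth (U_of Gamma) x in
  [/\ (forall x, U0 x -> UDp x),
      U0 0 &
      forall g, Gamma g ->
        [/\ (forall x, UDp ((g.1 - 1%:M) *m x)),
            (forall x, UDp x -> U0 ((g.1 - 1%:M) *m x)) &
            (forall x, U0 x -> (g.1 - 1%:M) *m x = 0)]].
Proof.
move=> UDp U0; split.
- move=> x [_ hx]; apply: orth_U => p [Gp _].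
  by apply: hx; apply: U_single.
- split; first by exists [::] => //; rewrite big_nil.
  by move=> w _; rewrite fm0l.
move=> g Gg; have eA : g.1 - 1%:M = Am g by [].
rewrite eA; split.
- move=> x; apply: orth_U => -[c y] /= [Gc hc].
  rewrite -/(Am c) fm_A // mulmxA.
  have e1 : Am g * Am c = Am c * Am g.
    have := hc g Gg; rewrite /aff_mul /= => -[] e _.
    rewrite /Am !mulrBl !mulrBr !mul1r !mulr1 -!mulmxE e.
    rewrite -!addrA !opprB; congr (_ + _).
    by rewrite addrCA [RHS]addrCA (addrC (- g.1)).
  have [_ e2] := pair_anti Gg Gc.
  have e3 : Am g *m Am c = 0 by exact: (@comm_anti _ (@h2M n n) _ _ e1 e2).
  by rewrite e3 mul0mx fm0r oppr0.
- move=> x hx; split; first exact: U_single.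
  apply: orth_U => -[h y] /= Gh.
  rewrite -/(Am h) fm_A // mulmxA.
  have := hx _ (@U_single _ _ y (commu_center Gg Gh)).
  rewrite commu_eq // /= addrAC subrr add0r mulr2n mulmxDl fmDr => /h2R.
  by rewrite -mulmxE => ->; rewrite oppr0.
- move=> x [_ hx]; apply: nondeg => z.
  rewrite fm_sym fm_A //.
  have := hx _ (@U_single _ _ z Gg); rewrite eA => ->.
  exact: oppr0.
Qed.

End Mx.

Theorem proposition4p3 (R : rcfType) (r s : nat)
  (Gamma : aff R r s -> Prop)
  (hG : is_iso_subgroup Gamma)
  (hopen : has_open_orbit (centralizer Gamma)) :
  let UDp := orth (U_of (center Gamma)) in
  let U0 := fun x => U_of Gamma x /\ orth (U_of Gamma) x in
  [/\ (forall x, U0 x -> UDp x),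
      U0 0 &
      forall g, Gamma g ->
        [/\ (forall x, UDp ((g.1 - 1%:M) *m x)),
            (forall x, UDp x -> U0 ((g.1 - 1%:M) *m x)) &
            (forall x, U0 x -> (g.1 - 1%:M) *m x = 0)]].
Proof. exact: (@main_sec R r s Gamma hG hopen). Qed.
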